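(* In the setting described in the context, let $0<r\le1$ and $k\ge0$, and let $s\in S\setminus(T\cup W_2)$ with $s\in U^k_r$. Then for every move $a_2\in\Gamma_2(s)$: either (1) $\mathrm{Dest}_k(s,a_2)\cap U^k_{>r}\ne\emptyset$, or (2) $\mathrm{Dest}_k(s,a_2)\subseteq U^k_r$ and there is a state $t\in\mathrm{Dest}_k(s,a_2)$ with $\ell_k(t)<\ell_k(s)$.
   Context: Concurrent game structure $G=(S,M,\Gamma_1,\Gamma_2,\delta)$: finite states, finite moves, nonempty move sets $\Gamma_i(s)$, $\delta(s,a_1,a_2)\in\mathrm{Distr}(S)$ (simultaneous independent moves); $\mathrm{Dest}(s,a_1,a_2)=\mathrm{supp}\,\delta(s,a_1,a_2)$. Selectors assign to each state a distribution on available moves. For a valuation $v:S\to[0,1]$: $\mathrm{Pre}_{\xi_1,\xi_2}(v)(s)=\sum_{a,b}\sum_tv(t)\delta(s,a,b)(t)\xi_1(s)(a)\xi_2(s)(b)$, $\mathrm{Pre}_{1:\xi_1}(v)(s)=\inf_{\xi_2}\mathrm{Pre}_{\xi_1,\xi_2}(v)(s)$, $\mathrm{Pre}_1(v)(s)=\sup_{\xi_1}\mathrm{Pre}_{1:\xi_1}(v)(s)$. Fix $T\subseteq S$; $W_2$ is the set of states from which player 1's value for reaching $T$ ($\sup_{\pi_1}\inf_{\pi_2}$ of the probability of visiting $T$) is 0; all states of $T\cup W_2$ are assumed absorbing. Value iteration: $u_0=[T]$ (indicator of $T$), $u_{k+1}=\mathrm{Pre}_1(u_k)$. For each $j\ge1$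 fix a player-1 selector $\zeta_j$ with $\mathrm{Pre}_{1:\zeta_j}(u_{j-1})=\mathrm{Pre}_1(u_{j-1})$. Entry time: $\ell_k(s)=\min\{j\le k:u_j(s)=u_k(s)\}$. Selector $\eta_k$: $\eta_k(s)=\zeta_{\ell_k(s)}(s)$ if $\ell_k(s)>0$, and $\eta_k(s)$ uniform on $\Gamma_1(s)$ if $\ell_k(s)=0$. $\mathrm{Dest}_k(s,a_2)=\bigcup_{a_1\in\mathrm{supp}(\eta_k(s))}\mathrm{Dest}(s,a_1,a_2)$. Value classes: $U^k_r=\{s:u_k(s)=r\}$ and $U^k_{>r}=\{s:u_k(s)>r\}$. *)

(* Defs.v *)
From mathcomp Require Import all_boot all_order all_algebra.
From mathcomp Require Import boolp classical_sets reals.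
Set Implicit Arguments. Unset Strict Implicit. Unset Printing Implicit Defensive.
Import Order.TTheory GRing.Theory Num.Theory.
Local Open Scope ring_scope.

Section ConcurrentGame.
Variables (R : realType) (S M : finType).
Variable delta : S -> M -> M -> {ffun S -> R}.
Variables (Gam1 Gam2 : S -> {set M}).
Variable T : {set S}.

Definition distr_on (A : {set M}) (d : {ffun M -> R}) : Prop :=
  (forall a, 0 <= d a) /\ (\sum_a d a = 1) /\ (forall a, a \notin A -> d a = 0).

Definition is_distr (d : {ffun S -> R}) : Prop :=
  (forall t, 0 <= d t) /\ \sum_t d t = 1.

Definition game_wf : Prop :=
  (forall s, Gam1 s != finset.set0) /\ (forall s, Gam2 s != finset.set0) /\
  (forall s a1 a2, is_distr (delta s a1 a2)).

Definition Dest (s : S) (a1 a2 : M) : {set S} := [set t | delta s a1 a2 t != 0].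

Definition selector := S -> {ffun M -> R}.
Definition selector1 (xi : selector) : Prop := forall s, distr_on (Gam1 s) (xi s).
Definition selector2 (xi : selector) : Prop := forall s, distr_on (Gam2 s) (xi s).

Definition Pre_sel (xi1 xi2 : selector) (v : S -> R) (s : S) : R :=
  \sum_a \sum_b \sum_t v t * delta s a b t * xi1 s a * xi2 s b.

Definition Pre1_sel (xi1 : selector) (v : S -> R) (s : S) : R :=
  inf [set Pre_sel xi1 xi2 v s | xi2 in selector2]%classic.

Definition Pre1 (v : S -> R) (s : S) : R :=
  sup [set Pre1_sel xi1 v s | xi1 in selector1]%classic.

Fixpoint u (k : nat) : S -> R :=
  match k with
  | 0 => fun s => (s \in T)%:R
  | k'.+1 => Pre1 (u k')
  end.

Definition ell (k : nat) (s : S) : nat :=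
  find (fun j => u j s == u k s) (iota 0 k.+1).

Definition uniform_on (A : {set M}) : {ffun M -> R} :=
  [ffun a => if a \in A then (#|A|%:R)^-1 else 0].

(* eta_k, built from the fixed family of optimal selectors zeta_j *)
Definition eta (zeta : nat -> selector) (k : nat) : selector :=
  fun s => if (0 < ell k s)%N then zeta (ell k s) s else uniform_on (Gam1 s).

Definition Dest_k (zeta : nat -> selector) (k : nat) (s : S) (a2 : M) : {set S} :=
  \bigcup_(a1 | eta zeta k s a1 != 0) Dest s a1 a2.

(* a strategy maps a history (past states p, current state s) to a distribution *)
Definition strategy := seq S -> S -> {ffun M -> R}.
Definition strategy1 (sg : strategy) : Prop := forall p s, distr_on (Gam1 s) (sg p s).
Definition strategy2 (sg : strategy) : Prop := forall p s, distr_on (Gam2 s) (sg p s).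

Fixpoint reach_within (sg1 sg2 : strategy) (n : nat) (p : seq S) (s : S) : R :=
  if s \in T then 1 else
  match n with
  | 0 => 0
  | n'.+1 => \sum_a \sum_b sg1 p s a * sg2 p s b *
              \sum_t delta s a b t * reach_within sg1 sg2 n' (rcons p s) t
  end.

Definition reach_prob (sg1 sg2 : strategy) (s : S) : R :=
  sup [set reach_within sg1 sg2 n [::] s | n in [set: nat]]%classic.

Definition value1 (s : S) : R :=
  sup [set inf [set reach_prob sg1 sg2 s | sg2 in strategy2]%classic | sg1 in strategy1]%classic.

Definition W2 (s : S) : Prop := value1 s = 0.

Definition absorbing_TW2 : Prop :=
  forall s, s \in T \/ W2 s -> forall a1 a2, Dest s a1 a2 = [set s].

End ConcurrentGame.

(* Main.v *)
Require Import Defs.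
From mathcomp Require Import all_boot all_order all_algebra.
From mathcomp Require Import boolp classical_sets reals.
From mathcomp Require Import ring.
Import Order.TTheory GRing.Theory Num.Theory.
Local Open Scope ring_scope.
Set Implicit Arguments. Unset Strict Implicit. Unset Printing Implicit Defensive.

Section Helpers.
Variables (R : realType) (S M : finType).
Variable delta : S -> M -> M -> {ffun S -> R}.
Variables (Gam1 Gam2 : S -> {set M}) (T : {set S}).
Hypothesis Hwf : game_wf delta Gam1 Gam2.

Lemma uniform_distr (A : {set M}) : A != finset.set0 -> distr_on A (uniform_on R A).
Proof.
move=> hA; split; [|split].
- by move=> a; rewrite ffunE; case: ifP => // _; rewrite invr_ge0 ler0n.
- rewrite (eq_bigr (fun a => if a \in A then (#|A|%:R)^-1 else 0)); last by move=> a _; rewrite ffunE.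
  rewrite -big_mkcond /= sumr_const -[_ *+ #|A|]mulr_natr mulVf // pnatr_eq0 -lt0n card_gt0 //.
- by move=> a ha; rewrite ffunE (negbTE ha).
Qed.

Definition unif1 : selector R S M := fun s => uniform_on R (Gam1 s).
Definition unif2 : selector R S M := fun s => uniform_on R (Gam2 s).

Lemma unif1_sel : selector1 Gam1 unif1.
Proof. by move=> s; apply: uniform_distr; case: Hwf. Qed.
Lemma unif2_sel : selector2 Gam2 unif2.
Proof. by move=> s; apply: uniform_distr; case: Hwf => _ []. Qed.

Definition point2 (s0 : S) (a2 : M) : selector R S M :=
  fun s => if s == s0 then [ffun b => (b == a2)%:R] else uniform_on R (Gam2 s).

Lemma point2_sel s0 a2 : a2 \in Gam2 s0 -> selector2 Gam2 (point2 s0 a2).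
Proof.
move=> ha s; rewrite /point2; case: eqP => [->|_]; last by apply: unif2_sel.
split; [|split].
- by move=> a; rewrite ffunE ler0n.
- rewrite (bigD1 a2) //= big1 ?ffunE ?eqxx ?addr0 // => b hb; by rewrite ffunE (negbTE hb).
- move=> a hn; rewrite ffunE; case: eqP => // e; by rewrite e ha in hn.
Qed.

Lemma mass (xi1 xi2 : selector R S M) s :
  distr_on (Gam1 s) (xi1 s) -> distr_on (Gam2 s) (xi2 s) ->
  \sum_a \sum_b \sum_t delta s a b t * xi1 s a * xi2 s b = 1.
Proof.
move=> [_ [h1 _]] [_ [h2 _]].
rewrite -h1; apply: eq_bigr => a _.
rewrite (eq_bigr (fun b => xi1 s a * xi2 s b)); last first.
  move=> b _; rewrite -!mulr_suml; case: Hwf => _ [_ /(_ s a b) [_ ->]]; by rewrite mul1r.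
by rewrite -mulr_sumr h2 mulr1.
Qed.

Lemma Pre_sel_ge0 xi1 xi2 v s : selector1 Gam1 xi1 -> selector2 Gam2 xi2 ->
  (forall t, 0 <= v t) -> 0 <= Pre_sel delta xi1 xi2 v s.
Proof.
move=> h1 h2 hv; apply: sumr_ge0 => a _; apply: sumr_ge0 => b _; apply: sumr_ge0 => t _.
have [hd _] := (Hwf.2.2 s a b).
by rewrite !mulr_ge0 //; [case: (h1 s) | case: (h2 s)].
Qed.

Lemma Pre_sel_mono xi1 xi2 v w s : selector1 Gam1 xi1 -> selector2 Gam2 xi2 ->
  (forall t, v t <= w t) -> Pre_sel delta xi1 xi2 v s <= Pre_sel delta xi1 xi2 w s.
Proof.
move=> h1 h2 hv; apply: ler_sum => a _; apply: ler_sum => b _; apply: ler_sum => t _.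
have [hd _] := (Hwf.2.2 s a b).
rewrite -!mulrA ler_wpM2r //.
by rewrite !mulr_ge0 //; [case: (h1 s) | case: (h2 s)].
Qed.

Lemma Pre_sel_le1 xi1 xi2 v s : selector1 Gam1 xi1 -> selector2 Gam2 xi2 ->
  (forall t, v t <= 1) -> Pre_sel delta xi1 xi2 v s <= 1.
Proof.
move=> h1 h2 hv; rewrite -(mass (h1 s) (h2 s)).
apply: ler_sum => a _; apply: ler_sum => b _; apply: ler_sum => t _.
have [hd _] := (Hwf.2.2 s a b).
rewrite -!mulrA ler_piMl //.
by rewrite !mulr_ge0 //; [case: (h1 s) | case: (h2 s)].
Qed.


Local Open Scope classical_set_scope.

Lemma Pre1_sel_bounds v xi1 s : (forall t, 0 <= v t <= 1) -> selector1 Gam1 xi1 ->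
  0 <= Pre1_sel delta Gam2 xi1 v s <= 1.
Proof.
move=> hv h1; have hv0 t : 0 <= v t by case/andP: (hv t).
have hv1 t : v t <= 1 by case/andP: (hv t).
apply/andP; split.
- apply: lb_le_inf; first by exists (Pre_sel delta xi1 unif2 v s); exists unif2 => //; apply: unif2_sel.
  by move=> _ [xi2 h2 <-]; apply: Pre_sel_ge0.
- apply: le_trans (Pre_sel_le1 s h1 (unif2_sel) hv1).
  apply: ge_inf; last by exists unif2 => //; apply: unif2_sel.
  by exists 0 => _ [xi2 h2 <-]; apply: Pre_sel_ge0.
Qed.

Lemma Pre1_bounds v s : (forall t, 0 <= v t <= 1) -> 0 <= Pre1 delta Gam1 Gam2 v s <= 1.
Proof.
move=> hv; apply/andP; split.
- apply: (@le_trans _ _ (Pre1_sel delta Gam2 unif1 v s)).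
  + by case/andP: (Pre1_sel_bounds s hv unif1_sel).
  + apply: ub_le_sup; last by exists unif1 => //; apply: unif1_sel.
    by exists 1 => _ [xi1 h1 <-]; case/andP: (Pre1_sel_bounds s hv h1).
- apply: ge_sup; first by exists (Pre1_sel delta Gam2 unif1 v s); exists unif1 => //; apply: unif1_sel.
  by move=> _ [xi1 h1 <-]; case/andP: (Pre1_sel_bounds s hv h1).
Qed.

Lemma Pre1_sel_mono v w xi1 s : (forall t, 0 <= v t <= 1) -> (forall t, 0 <= w t <= 1) ->
  (forall t, v t <= w t) -> selector1 Gam1 xi1 ->
  Pre1_sel delta Gam2 xi1 v s <= Pre1_sel delta Gam2 xi1 w s.
Proof.
move=> hv hw hvw h1; have hv0 t : 0 <= v t by case/andP: (hv t).
apply: lb_le_inf; first by exists (Pre_sel delta xi1 unif2 w s); exists unif2 => //; apply: unif2_sel.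
move=> _ [xi2 h2 <-]; apply: le_trans (Pre_sel_mono s h1 h2 hvw).
apply: ge_inf; last by exists xi2.
by exists 0 => _ [xi h <-]; apply: Pre_sel_ge0.
Qed.

Lemma Pre1_mono v w s : (forall t, 0 <= v t <= 1) -> (forall t, 0 <= w t <= 1) ->
  (forall t, v t <= w t) -> Pre1 delta Gam1 Gam2 v s <= Pre1 delta Gam1 Gam2 w s.
Proof.
move=> hv hw hvw.
apply: ge_sup; first by exists (Pre1_sel delta Gam2 unif1 v s); exists unif1 => //; apply: unif1_sel.
move=> _ [xi1 h1 <-]; apply: le_trans (Pre1_sel_mono s hv hw hvw h1) _.
apply: ub_le_sup; last by exists xi1.
by exists 1 => _ [xi h <-]; case/andP: (Pre1_sel_bounds s hw h).
Qed.

Lemma u_bounds j t : 0 <= u delta Gam1 Gam2 T j t <= 1.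
Proof.
elim: j t => [|j IH] t /=; first by case: (t \in T); rewrite ?lexx ?ler01.
exact: Pre1_bounds.
Qed.

Hypothesis Habs : absorbing_TW2 delta Gam1 Gam2 T.

Lemma u_01 t : u delta Gam1 Gam2 T 0 t <= u delta Gam1 Gam2 T 1 t.
Proof.
case hT: (t \in T); last by rewrite /= hT; case/andP: (u_bounds 1 t).
rewrite /= hT.
apply: le_trans (ub_le_sup _ _); last 2 first.
- by exists 1 => _ [xi h <-]; case/andP: (Pre1_sel_bounds t (u_bounds 0) h).
- by exists unif1 => //; apply: unif1_sel.
apply: lb_le_inf; first by exists (Pre_sel delta unif1 unif2 (u delta Gam1 Gam2 T 0) t); exists unif2 => //; apply: unif2_sel.
move=> _ [xi2 h2 <-]; rewrite le_eqVlt; apply/orP; left; apply/eqP.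
rewrite -[LHS](mass (unif1_sel t) (h2 t)); apply: eq_bigr => a _; apply: eq_bigr => b _.
apply: eq_bigr => t' _ /=.
case: (eqVneq t' t) => [->|ne]; first by rewrite hT mul1r.
have : t' \notin Dest delta t a b by rewrite (Habs (or_introl hT)) !inE.
by rewrite inE negbK => /eqP ->; rewrite !(mulr0, mul0r).
Qed.

Lemma u_step j t : u delta Gam1 Gam2 T j t <= u delta Gam1 Gam2 T j.+1 t.
Proof.
elim: j t => [|j IH] t; first exact: u_01.
exact: Pre1_mono (u_bounds j) (u_bounds j.+1) IH.
Qed.

Lemma u_mono i j t : (i <= j)%N -> u delta Gam1 Gam2 T i t <= u delta Gam1 Gam2 T j t.
Proof.
elim: j => [|j IH]; first by rewrite leqn0 => /eqP ->.
rewrite leq_eqVlt => /orP [/eqP -> //| hi].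
exact: le_trans (IH hi) (u_step j t).
Qed.

Lemma ell_spec k t : u delta Gam1 Gam2 T (ell delta Gam1 Gam2 T k t) t = u delta Gam1 Gam2 T k t
  /\ (ell delta Gam1 Gam2 T k t <= k)%N.
Proof.
have hh : has (fun j => u delta Gam1 Gam2 T j t == u delta Gam1 Gam2 T k t) (iota 0 k.+1).
  apply/hasP; exists k; last by rewrite /= eqxx.
  by rewrite mem_iota add0n leq0n ltnSn.
have := nth_find 0%N hh; rewrite has_find size_iota in hh.
rewrite nth_iota // add0n => /eqP; rewrite /ell; split => //.
Qed.

Lemma ell_min k t j : (j <= k)%N -> u delta Gam1 Gam2 T j t = u delta Gam1 Gam2 T k t ->
  (ell delta Gam1 Gam2 T k t <= j)%N.
Proof.
move=> hj he; rewrite leqNgt; apply/negP => hlt.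
have := before_find 0%N hlt; rewrite nth_iota ?add0n ?he ?eqxx //.
Qed.

End Helpers.
Unset Implicit Arguments.

Theorem lemma4 (R : realType) (S M : finType)
    (delta : S -> M -> M -> {ffun S -> R}) (Gam1 Gam2 : S -> {set M})
    (T : {set S}) (zeta : nat -> selector R S M)
    (Hwf : game_wf delta Gam1 Gam2)
    (Habs : absorbing_TW2 delta Gam1 Gam2 T)
    (Hzeta : forall j : nat, (1 <= j)%N ->
       selector1 Gam1 (zeta j) /\
       Pre1_sel delta Gam2 (zeta j) (u delta Gam1 Gam2 T j.-1) =
       Pre1 delta Gam1 Gam2 (u delta Gam1 Gam2 T j.-1))
    (r : R) (k : nat) (s : S)
    (Hr0 : 0 < r) (Hr1 : r <= 1)
    (HsT : s \notin T) (HsW : ~ W2 delta Gam1 Gam2 T s)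
    (Hsr : u delta Gam1 Gam2 T k s = r) :
  forall a2, a2 \in Gam2 s ->
    (exists t, t \in Dest_k delta Gam1 Gam2 T zeta k s a2 /\
                r < u delta Gam1 Gam2 T k t)
    \/
    ((forall t, t \in Dest_k delta Gam1 Gam2 T zeta k s a2 ->
                u delta Gam1 Gam2 T k t = r) /\
     (exists t, t \in Dest_k delta Gam1 Gam2 T zeta k s a2 /\
                (ell delta Gam1 Gam2 T k t < ell delta Gam1 Gam2 T k s)%N)).
Proof.
move=> a2 ha2.
have [Hul Hlk] := ell_spec delta Gam1 Gam2 T k s.
move El: (ell delta Gam1 Gam2 T k s) Hul Hlk => l Hul Hlk.
have l0 : (0 < l)%N.
  rewrite lt0n; apply/negP => /eqP l0; move: Hul; rewrite l0 Hsr /= (negbTE HsT) => h.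
  by move: Hr0; rewrite -h ltxx.
have etaE : eta delta Gam1 Gam2 T zeta k s = zeta l s by rewrite /eta El l0.
have [Hsel HPre] := Hzeta l l0.
set v := u delta Gam1 Gam2 T l.-1.
have HuL : u delta Gam1 Gam2 T l s = Pre1_sel delta Gam2 (zeta l) v s.
  by rewrite HPre -{1}(prednK l0).
have v0 t : 0 <= v t by case/andP: (u_bounds T Hwf l.-1 t).
set z := zeta l s.
have key : r <= \sum_a \sum_t v t * delta s a a2 t * z a.
  rewrite -Hsr -Hul HuL.
  apply: (@le_trans _ _ (Pre_sel delta (zeta l) (point2 R Gam2 s a2) v s)).
    apply: ge_inf; last by exists (point2 R Gam2 s a2) => //; exact: (point2_sel Hwf ha2).
    by exists 0 => _ [xi h <-]; exact: (Pre_sel_ge0 Hwf s Hsel h v0).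
  rewrite le_eqVlt; apply/orP; left; apply/eqP.
  rewrite /Pre_sel; apply: eq_bigr => a _; rewrite (bigD1 a2) //= [X in _ + X]big1 ?addr0.
    by apply: eq_bigr => t _; rewrite /point2 eqxx ffunE eqxx mulr1.
  by move=> b hb; apply: big1 => t _; rewrite /point2 eqxx ffunE (negbTE hb) mulr0.
have inDP t : t \in Dest_k delta Gam1 Gam2 T zeta k s a2 <->
    exists a, z a != 0 /\ delta s a a2 t != 0.
  rewrite /Dest_k etaE; split => [/bigcupP [a ha]|[a [ha hd]]].
    by rewrite inE => hd; exists a.
  by apply/bigcupP; exists a => //; rewrite inE.
case: (pselect (exists t, t \in Dest_k delta Gam1 Gam2 T zeta k s a2 /\
                r < u delta Gam1 Gam2 T k t)) => [h|nh]; [by left|right].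
have Hle t : t \in Dest_k delta Gam1 Gam2 T zeta k s a2 -> u delta Gam1 Gam2 T k t <= r.
  by move=> ht; rewrite leNgt; apply/negP => hlt; apply: nh; exists t.
have hvu t : v t <= u delta Gam1 Gam2 T k t.
  exact: (u_mono Hwf Habs t (leq_trans (leq_pred l) Hlk)).
have w0 a t : 0 <= delta s a a2 t * z a.
  by apply: mulr_ge0; [apply: (Hwf.2.2 s a a2).1 | apply: (Hsel s).1].
have wsum : \sum_a \sum_t delta s a a2 t * z a = 1.
  rewrite -(Hsel s).2.1; apply: eq_bigr => a _.
  by rewrite -mulr_suml (Hwf.2.2 s a a2).2 mul1r.
have tge0 a t : 0 <= delta s a a2 t * z a * (r - v t).
  case: (eqVneq (delta s a a2 t * z a) 0) => [->|hw]; first by rewrite mul0r.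
  apply: mulr_ge0 (w0 a t) _; rewrite subr_ge0.
  apply: le_trans (hvu t) (Hle t _); apply/inDP; exists a.
  by move: hw; rewrite mulf_eq0 negb_or => /andP [hd hz]; split.
have hsum : \sum_a \sum_t delta s a a2 t * z a * (r - v t) = 0.
  apply/eqP; rewrite eq_le; apply/andP; split.
  - have -> : \sum_a \sum_t delta s a a2 t * z a * (r - v t) =
       r * (\sum_a \sum_t delta s a a2 t * z a) - \sum_a \sum_t v t * delta s a a2 t * z a.
      rewrite mulr_sumr -sumrB; apply: eq_bigr => a _.
      by rewrite mulr_sumr -sumrB; apply: eq_bigr => t _; ring.
    by rewrite wsum mulr1 subr_le0.
  - by apply: sumr_ge0 => a _; apply: sumr_ge0 => t _; apply: tge0.
have terms a t : delta s a a2 t * z a * (r - v t) = 0.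
  have h1 := psumr_eq0P (fun a _ => sumr_ge0 _ (fun t _ => tge0 a t)) hsum (i:=a) isT.
  exact: (psumr_eq0P (fun t _ => tge0 a t) h1 (i:=t) isT).
have hvr t : t \in Dest_k delta Gam1 Gam2 T zeta k s a2 -> v t = r.
  move=> /inDP [a [hz hd]]; move: (terms a t) => /eqP.
  by rewrite !mulf_eq0 (negbTE hd) (negbTE hz) /= subr_eq0 => /eqP ->.
have hur t : t \in Dest_k delta Gam1 Gam2 T zeta k s a2 -> u delta Gam1 Gam2 T k t = r.
  move=> ht; apply/le_anti; rewrite Hle //=; rewrite -(hvr t ht); exact: hvu.
split; first exact: hur.
case: (pselect (exists a t, delta s a a2 t * z a != 0)) => [[a [t hw]]|nw].
  have ht : t \in Dest_k delta Gam1 Gam2 T zeta k s a2.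
    apply/inDP; exists a.
    by move: hw; rewrite mulf_eq0 negb_or => /andP [hd hz]; split.
  exists t; split => //.
  apply: (@leq_ltn_trans l.-1); last by rewrite ltn_predL.
  apply: ell_min; first exact: (leq_trans (leq_pred l) Hlk).
  by rewrite (hur t ht); exact: (hvr t ht).
exfalso; move: wsum; rewrite big1 => [| a _].
  by move/eqP; rewrite eq_sym oner_eq0.
apply: big1 => t _; apply/eqP/negPn/negP => hw; apply: nw; by exists a, t.
Qed.
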